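(* Let $p\ge 2$ be an integer. For every integer $n\ge 10^{p-1}+9$ and all $a,b\in\{0,\dots,9\}$ with $a<b$, we have $P_{(a,n,p)}>P_{(b,n,p)}$.
   Context: For an integer $x\ge 10^{p-1}$, the ''$p$-th digit of $x$'' is the $p$-th digit of its decimal expansion counted from the left. For $d\in\{0,\dots,9\}$ and $m\ge 10^{p-1}$, let $N_d(m)$ be the number of integers $x$ with $10^{p-1}\le x\le m$ whose $p$-th digit is $d$. For $n\ge 10^{p-1}$, $$P_{(d,n,p)}=\frac{1}{n+1-10^{p-1}}\sum_{m=10^{p-1}}^{n}\frac{N_d(m)}{m+1-10^{p-1}},$$ which is the probability that the $p$-th digit of $x$ is $d$ when $m$ is chosen uniformly in $\{10^{p-1},\dots,n\}$ and then $x$ uniformly in $\{10^{p-1},\dots,m\}$. *)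

(* Defs.v *)
From mathcomp Require Import all_boot all_order all_algebra.
Set Implicit Arguments. Unset Strict Implicit. Unset Printing Implicit Defensive.
Import Order.TTheory GRing.Theory Num.Theory.

(* Number of decimal digits of x > 0 is trunc_log 10 x + 1.
   The p-th digit of x counted from the left (for x >= 10^(p-1)):
   drop the last (ndigits x - p) digits and take the units digit. *)
Definition ndigits (x : nat) : nat := (trunc_log 10 x).+1.

Definition pth_digit (p x : nat) : nat :=
  (x %/ 10 ^ (ndigits x - p)) %% 10.

Definition Ncount (p d m : nat) : nat :=
  \sum_(10 ^ p.-1 <= x < m.+1) (pth_digit p x == d).

Definition Pdigit (d n p : nat) : rat :=
  ((n.+1 - 10 ^ p.-1)%:R)^-1 *
  \sum_(10 ^ p.-1 <= m < n.+1) ((Ncount p d m)%:R / (m.+1 - 10 ^ p.-1)%:R).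

(* Main.v *)
Require Import Defs.
From mathcomp Require Import all_boot all_order all_algebra zify.
Import Order.TTheory GRing.Theory Num.Theory.

Lemma digit_shift p x a b : 2 <= p -> 10 ^ p.-1 <= x -> pth_digit p x = b ->
  a < b -> b <= 9 ->
  let y := x - (b - a) * 10 ^ (ndigits x - p) in
  [/\ ndigits y = ndigits x, pth_digit p y = a, 10 ^ p.-1 <= y,
      y <= x & (b - a) * 10 ^ (ndigits x - p) <= x].
Proof.
move=> hp hx hd hab hb y.
have x0 : 0 < x by apply: leq_trans hx; rewrite expn_gt0.
have [lo hi] := andP (trunc_log_bounds (isT : 1 < 10) x0).
set k := trunc_log 10 x in lo hi.
have hk : p.-1 <= k by apply: trunc_log_max.
rewrite /y /ndigits -/k; rewrite /pth_digit /ndigits -/k in hd.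
set s := k.+1 - p in hd *.
have ek : 10 ^ k = 10 ^ p.-1 * 10 ^ s by rewrite -expnD; congr (_ ^ _); lia.
have ek1 : 10 ^ k.+1 = 10 * (10 ^ p.-1 * 10 ^ s) by rewrite expnS ek.
have ec : 10 ^ p.-1 = 10 * 10 ^ p.-2 by rewrite -expnS; congr (_ ^ _); lia.
set e := 10 ^ s in ek ek1 *.
set c := 10 ^ p.-2 in ec.
rewrite ec in ek ek1 *.
have e0 : 0 < e by rewrite expn_gt0.
have c0 : 0 < c by rewrite expn_gt0.
have dx := divn_eq x e.
set q := x %/ e in hd dx.
set r := x %% e in dx.
have re : r < e by rewrite ltn_mod.
have dq := divn_eq q 10.
rewrite hd in dq.
set q' := q %/ 10 in dq.
have hq1 : 10 * c <= q.
  rewrite leqNgt; apply/negP => h.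
  have h2 : q.+1 * e <= 10 * c * e by rewrite leq_mul2r h orbT.
  rewrite mulSn in h2. lia.
have hq2 : q < 100 * c.
  rewrite ltnNge; apply/negP => h.
  have : 100 * c * e <= q * e by rewrite leq_mul2r h orbT.
  lia.
have hq' : c <= q' by lia.
have eq1 : q * e = (q' * 10 + a) * e + (b - a) * e.
  by rewrite -mulnDl; congr (_ * _); lia.
have ey : x - (b - a) * e = (q' * 10 + a) * e + r by lia.
rewrite ey.
have dy : ((q' * 10 + a) * e + r) %/ e = q' * 10 + a.
  by rewrite divnMDl // divn_small // addn0.
have l1 : 10 * c * e <= (q' * 10 + a) * e by rewrite leq_mul2r; apply/orP; right; lia.
have l2 : 10 * c <= 10 * c * e by rewrite leq_pmulr.
have ty : trunc_log 10 ((q' * 10 + a) * e + r) = k.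
  apply: trunc_log_eq => //; rewrite ek ek1; apply/andP; split; lia.
split => //; try lia.
rewrite /pth_digit /ndigits ty -/s -/e dy modnMDl modn_small //; lia.
Qed.

Lemma sum_card L M (R : pred nat) :
  \sum_(L <= x < M) (R x : nat) = #|[set i : 'I_M | (L <= i) && R i]|.
Proof.
rewrite big_geq_mkord -sum1_card big_mkcond [RHS]big_mkcond /=.
apply: eq_bigr => i _; rewrite in_set; by case: (L <= i); case: (R i).
Qed.

Lemma count_inj L m (P Q : pred nat) (f : nat -> nat) :
  (forall x, L <= x <= m -> P x -> [/\ L <= f x, f x <= m & Q (f x)]) ->
  (forall x y, L <= x <= m -> P x -> L <= y <= m -> P y -> f x = f y -> x = y) ->
  \sum_(L <= x < m.+1) (P x : nat) <= \sum_(L <= x < m.+1) (Q x : nat).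
Proof.
move=> hf hi; rewrite !sum_card.
set A := [set i : 'I_m.+1 | _].
set B := [set i : 'I_m.+1 | _].
have inj : {in A &, injective (fun i : 'I_m.+1 => (inord (f i) : 'I_m.+1))}.
  move=> i j; rewrite !in_set => /andP [hi1 hi2] /andP [hj1 hj2] /(congr1 val).
  have := ltn_ord i; have := ltn_ord j => Hj Hi.
  have [_ fi _] := hf i (ltac:(lia)) hi2.
  have [_ fj _] := hf j (ltac:(lia)) hj2.
  rewrite /= !inordK; try lia.
  move=> e; apply: val_inj => /=; apply: hi e => //; lia.
rewrite -(card_in_imset inj); apply: subset_leq_card.
apply/subsetP => _ /imsetP [i iA ->]; move: iA; rewrite !in_set => /andP [h1 h2].
have := ltn_ord i => Hi.
have [g1 g2 g3] := hf i (ltac:(lia)) h2.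
rewrite inordK; last lia.
by rewrite g1 g3.
Qed.

Lemma Nle p a b m : 2 <= p -> a < b -> b <= 9 -> Ncount p b m <= Ncount p a m.
Proof.
move=> hp hab hb; rewrite /Ncount.
apply: (@count_inj _ _ _ _ (fun x => x - (b - a) * 10 ^ (ndigits x - p))).

- move=> x /andP [h1 h2] /eqP hd.
  have [_ d2 d3 d4 _] := @digit_shift p _ a b hp h1 hd hab hb.
  split => //; [lia | by rewrite d2].
- move=> x y /andP [x1 x2] /eqP hx /andP [y1 y2] /eqP hy e.
  have [dx _ _ _ kx] := @digit_shift p _ a b hp x1 hx hab hb.
  have [dy _ _ _ ky] := @digit_shift p _ a b hp y1 hy hab hb.
  have nd : ndigits x = ndigits y by rewrite -dx e dy.
  rewrite nd in e kx; lia.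
Qed.

Lemma digit_small p j : 2 <= p -> j <= 9 -> pth_digit p (10 ^ p.-1 + j) = j.
Proof.
move=> hp hj.
have ec : 10 ^ p.-1 = 10 * 10 ^ p.-2 by rewrite -expnS; congr (_ ^ _); lia.
have c0 : 0 < 10 ^ p.-2 by rewrite expn_gt0.
have t : trunc_log 10 (10 ^ p.-1 + j) = p.-1.
  apply: trunc_log_eq => //; rewrite expnS ec; apply/andP; split; lia.
rewrite /pth_digit /ndigits t.
have -> : p.-1.+1 - p = 0 by lia.
rewrite expn0 divn1 ec -modnDml.
have -> : 10 * 10 ^ p.-2 = 10 ^ p.-2 * 10 by rewrite mulnC.
by rewrite modnMl add0n modn_small.
Qed.

Lemma Nlt p a b : 2 <= p -> a < b -> b <= 9 ->
  Ncount p b (10 ^ p.-1 + a) < Ncount p a (10 ^ p.-1 + a).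
Proof.
move=> hp hab hb; rewrite /Ncount.
have hd : forall x, 10 ^ p.-1 <= x < (10 ^ p.-1 + a).+1 -> pth_digit p x = x - 10 ^ p.-1.
  move=> x hx; have -> : x = 10 ^ p.-1 + (x - 10 ^ p.-1) by lia.
  rewrite digit_small //; lia.
rewrite big1_seq; last first.
  move=> x /andP [_]; rewrite mem_index_iota => hx; rewrite hd //.
  have : x - 10 ^ p.-1 != b by lia.
  by move=> /negbTE ->.
rewrite big_nat_recr /=; last lia.
rewrite digit_small // ?eqxx; lia.
Qed.

Theorem proposition3 (p : nat) (hp : (2 <= p)%N) (n : nat)
  (hn : (10 ^ p.-1 + 9 <= n)%N) (a b : nat) (hab : (a < b)%N) (hb : (b <= 9)%N) :
  (Pdigit b n p < Pdigit a n p)%R.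
Proof.
rewrite /Pdigit.
set L := 10 ^ p.-1 in hn *.
rewrite ltr_pM2l; last by rewrite invr_gt0 ltr0n; lia.
have den : forall m, L <= m -> (0 < (m.+1 - L)%:R :> rat)%R by move=> m hm; rewrite ltr0n; lia.
have term : forall m, L <= m ->
   ((Ncount p b m)%:R / (m.+1 - L)%:R <= (Ncount p a m)%:R / (m.+1 - L)%:R :> rat)%R.
  move=> m hm; rewrite ler_pM2r ?invr_gt0 ?den // ler_nat; exact: Nle.
rewrite (@big_cat_nat _ _ _ (L + a)) /=; [|lia|lia].
rewrite [X in (_ < X)%R](@big_cat_nat _ _ _ (L + a)) /=; [|lia|lia].
apply: ler_ltD.
  apply: ler_sum_nat => i /andP [h1 h2]; exact: term.
rewrite big_ltn; last lia.
rewrite [X in (_ < X)%R]big_ltn; last lia.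
apply: ltr_leD.
  rewrite ltr_pM2r ?invr_gt0 ?den ?ltr_nat; try lia; exact: Nlt.
apply: ler_sum_nat => i /andP [h1 h2]; apply: term; lia.
Qed.
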